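(* Let $\mathcal{R}$ be a ring and $(\mathcal{C}^{\bullet},\partial)$ a bigraded cochain complex of $\mathcal{R}$-modules as in the context. For each $p,q\in\mathbb{Z}$ with $p+q=k$ there is a commutative diagram with exact rows and exact columns whose rows are \[ 0\to\mathcal{B}^{k}_{q}\cap\mathcal{C}^{p,q}\hookrightarrow\mathcal{B}^{k}_{q}\xrightarrow{\pi_{q+1}}\mathcal{B}^{k}_{q+1}\to0, \qquad 0\to\mathcal{Z}^{k}_{q}\cap\mathcal{C}^{p,q}\hookrightarrow\mathcal{Z}^{k}_{q}\xrightarrow{\pi_{q+1}}\mathcal{Z}^{k}_{q+1}\to0, \] \[ 0\to\frac{\mathcal{Z}^{k}_{q}\cap\mathcal{C}^{p,q}}{\mathcal{B}^{k}_{q}\cap\mathcal{C}^{p,q}}\to\frac{\mathcal{Z}^{k}_{q}}{\mathcal{B}^{k}_{q}}\xrightarrow{\bar\pi_{q+1}}\frac{\mathcal{Z}^{k}_{q+1}}{\mathcal{B}^{k}_{q+1}}\to0, \] (listed top, middle, bottom), where the vertical maps from the top to the middle row are inclusions, those from the middle to the bottom row are the canonical projections, and the bottom row maps are induced. (Here $\mathcal{Z}^{k}_{0}=Z^{k}(\mathcal{C},\partial)$ and $\mathcal{B}^{k}_{0}=B^{k}(\mathcal{C},\partial)$.)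
   Context: Setting: $\mathcal{C}^{k}=\bigoplus_{p+q=k}\mathcal{C}^{p,q}$ with $\mathcal{C}^{p,q}=\{0\}$ if $p<0$ or $q<0$; $\partial$ is $\mathcal{R}$-linear of degree $1$, $\partial^{2}=0$, $\partial=\partial_{2,-1}+\partial_{1,0}+\partial_{0,1}$ with $\partial_{i,j}(\mathcal{C}^{p,q})\subseteq\mathcal{C}^{p+i,q+j}$. $G^{q}\mathcal{C}:=\bigoplus_{j\geq q}\mathcal{C}^{i,j}$ and $\pi_{q}:\mathcal{C}\to G^{q}\mathcal{C}$ is the projection along the bigrading. $\mathcal{N}^{p,q}:=\ker(\partial_{0,1}|_{\mathcal{C}^{p,q}})\cap\ker(\partial_{2,-1}|_{\mathcal{C}^{p,q}})$, $\mathcal{N}_{q}:=\bigoplus_{p}\mathcal{N}^{p-q,q}$ (degree-$m$ part $\mathcal{N}^{m-q,q}$), a subcomplex of $(\mathcal{C},\partial)$ with differential $\overline{\partial}:=\partial|_{\mathcal{N}_q}$. For $\eta\in\mathcal{C}^k$, $(\partial\eta)_{i,j}$ is the $\mathcal{C}^{i,j}$-component of $\partial\eta$. $\mathcal{M}^{k}:=\{\eta\in\mathcal{C}^{k}\mid(\partial\eta)_{i,j}\in B^{k+1}(\mathcal{N}_{j},\overline{\partial})\ \forall\, i+j=k+1\}$; $\mathcal{Z}^{k}_{q}:=\{\pi_{q}(\eta)\mid\eta\in\mathcal{M}^{k},\ \pi_{q}(\partial\eta)=0\}$; $\mathcal{B}^{k}_{q}:=\pi_{q}(B^{k}(\mathcal{C},\partial))$.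 *)

(* Defs.v *)
From HB Require Import structures.
From mathcomp Require Import all_boot all_order all_algebra.
Set Implicit Arguments. Unset Strict Implicit. Unset Printing Implicit Defensive.
Import Order.TTheory GRing.Theory Num.Theory.
Local Open Scope ring_scope.

(* A bigraded cochain complex of R-modules, encoded on the total module
   C = (+)_k C^k = (+)_{p,q} C^{p,q} by the family of projections
   e p q : C -> C onto the summand C^{p,q} (complete family of orthogonal
   idempotents, finite support), and the differential d = \partial. *)
Record bigraded_complex (R : pzRingType) (C : lmodType R)
    (e : int -> int -> {linear C -> C}) (d : {linear C -> C}) : Prop := {
  bc_orth : forall p q p' q' (x : C),
      e p q (e p' q' x) = if (p == p') && (q == q') then e p q x else 0;
  bc_neg : forall p q (x : C), (p < 0) || (q < 0) -> e p q x = 0;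
  bc_fin : forall x : C, exists s : seq (int * int),
      x = \sum_(pq <- s) e pq.1 pq.2 x;
  bc_dd : forall x : C, d (d x) = 0;
  (* d = d_{2,-1} + d_{1,0} + d_{0,1}, d_{i,j}(C^{p,q}) \subseteq C^{p+i,q+j} *)
  bc_bideg : forall p q p' q' (x : C),
      ~~ [|| (p' == p + 2) && (q' == q - 1),
             (p' == p + 1) && (q' == q) |
             (p' == p) && (q' == q + 1)] ->
      e p' q' (d (e p q x)) = 0
}.

Section Defs.
Variables (R : pzRingType) (C : lmodType R).
Variables (e : int -> int -> {linear C -> C}) (d : {linear C -> C}).

Definition Cpq (p q : int) (x : C) : Prop := e p q x = x.

Definition Ck (k : int) (x : C) : Prop :=
  forall p q : int, p + q != k -> e p q x = 0.

(* pi_q : C -> G^q C, on elements of total degree k (the only ones it is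
   applied to): sum of the components in C^{k-j,j}, j >= q. *)
Definition pik (k q : int) (x : C) : C :=
  \sum_(0 <= j < (absz k).+1 | q <= j%:Z) e (k - j%:Z) j%:Z x.

(* N^{p,q} = ker d_{0,1} \cap ker d_{2,-1} on C^{p,q} *)
Definition Npq (p q : int) (x : C) : Prop :=
  Cpq p q x /\ e p (q + 1) (d x) = 0 /\ e (p + 2) (q - 1) (d x) = 0.

(* y \in B^{k+1}(N_j, dbar) : image of the degree-k part N^{k-j,j} *)
Definition BN (k j : int) (y : C) : Prop :=
  exists x, Npq (k - j) j x /\ y = d x.

Definition Mk (k : int) (eta : C) : Prop :=
  Ck k eta /\ forall i j : int, i + j = k + 1 -> BN k j (e i j (d eta)).

Definition Zk (k q : int) (z : C) : Prop :=
  exists eta, Mk k eta /\ pik (k + 1) q (d eta) = 0 /\ z = pik k q eta.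

Definition Bk (k q : int) (b : C) : Prop :=
  exists y, Ck (k - 1) y /\ b = pik k q (d y).

Definition submod (P : C -> Prop) : Prop :=
  [/\ P 0, (forall x y, P x -> P y -> P (x + y)) &
      (forall (a : R) x, P x -> P (a *: x))].

Definition short_exact_incl (K A B : C -> Prop) (f : C -> C) : Prop :=
  [/\ (forall x, K x -> A x),
      (forall x, A x -> B (f x)),
      (forall y, B y -> exists x, A x /\ f x = y) &
      (forall x, A x -> (f x = 0 <-> K x))].

(* 0 -> K/K' --incl--> A/A' --fbar--> B/B' -> 0 exact, with the maps
   induced by the inclusion K -> A and by f; written out elementwise
   (including well-definedness of the induced maps). *)
Definition short_exact_quot (K K' A A' B B' : C -> Prop) (f : C -> C) : Prop :=
  [/\ (forall x, K' x -> A' x) /\ (forall x, A' x -> B' (f x)),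
      (forall x, K x -> A' x -> K' x),
      (forall x, K x -> B' (f x)),
      (forall x, A x -> B' (f x) -> exists y, K y /\ A' (x - y)) &
      (forall w, B w -> exists x, A x /\ B' (f x - w))].

End Defs.

(* Main.v *)
Require Import Defs.
From HB Require Import structures.
From mathcomp Require Import all_boot all_order all_algebra.
From mathcomp Require Import zify.
Import Order.TTheory GRing.Theory Num.Theory.
Local Open Scope ring_scope.

Lemma ext_e {R : pzRingType} {C : lmodType R}
    {e : int -> int -> {linear C -> C}} {d : {linear C -> C}}
    (Hc : bigraded_complex e d) (x y : C) :
  (forall a b, e a b x = e a b y) -> x = y.
Proof.
move=> H; have [s hs] := bc_fin Hc (x - y).
apply/eqP; rewrite -subr_eq0; apply/eqP; rewrite hs big1 // => pq _.
by rewrite linearB /= H subrr.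
Qed.

Lemma e_pik {R : pzRingType} {C : lmodType R}
    {e : int -> int -> {linear C -> C}} {d : {linear C -> C}}
    (Hc : bigraded_complex e d) (m q a b : int) (z : C) :
  e a b (pik e m q z) = if (a + b == m) && (q <= b) then e a b z else 0.
Proof.
rewrite /pik linear_sum /=.
under eq_bigr => j _ do rewrite (bc_orth Hc).
case: (boolP ((a + b == m) && (q <= b))) => [/andP[/eqP hab hqb]|hn].
  have [hb0|hb0] := boolP ((0 <= b) && (b <= (absz m)%:Z)); last first.
    have -> : e a b z = 0.
      by apply: (bc_neg Hc); move: hb0; lia.
    by rewrite big1 // => j _; case: ifP.
  case/andP: hb0 => hb0 hbm.
  have [n hn] : exists n : nat, b = n%:Z by exists (absz b); lia.
  subst b.
  have hmem : (n \in index_iota 0 (absz m).+1) by rewrite mem_index_iota; lia.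
  rewrite big_mkcond (bigD1_seq n hmem (iota_uniq _ _)) /=.
  rewrite hqb.
    have -> : (a == m - n%:Z) && (n%:Z == n%:Z :> int) by apply/andP; split=> //; lia.
    rewrite big1 ?addr0 // => j hjn.
    have -> : (n%:Z == j%:Z :> int) = false by apply/negbTE; move: hjn; lia.
    by rewrite andbF; case: ifP.
rewrite big1 // => j hj; case: ifP => // /andP[/eqP ha /eqP hb].
exfalso; move: hn hj; rewrite ha hb; lia.
Qed.

Lemma pikD {R : pzRingType} {C : lmodType R}
    {e : int -> int -> {linear C -> C}} {d : {linear C -> C}}
    (Hc : bigraded_complex e d) m q (x y : C) :
  pik e m q (x + y) = pik e m q x + pik e m q y.
Proof.
apply: (ext_e Hc) => a b; rewrite linearD !(e_pik Hc) linearD.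
by case: ifP; rewrite ?addr0.
Qed.

Lemma pikZ {R : pzRingType} {C : lmodType R}
    {e : int -> int -> {linear C -> C}} {d : {linear C -> C}}
    (Hc : bigraded_complex e d) m q (c : R) (x : C) :
  pik e m q (c *: x) = c *: pik e m q x.
Proof.
apply: (ext_e Hc) => a b; rewrite linearZ_LR !(e_pik Hc) linearZ_LR.
by case: ifP; rewrite ?scaler0.
Qed.

Lemma pik0 {R : pzRingType} {C : lmodType R}
    {e : int -> int -> {linear C -> C}} {d : {linear C -> C}}
    (Hc : bigraded_complex e d) m q : pik e m q 0 = 0.
Proof. by have := pikZ Hc m q 0 0; rewrite !scale0r. Qed.

Lemma pikB {R : pzRingType} {C : lmodType R}
    {e : int -> int -> {linear C -> C}} {d : {linear C -> C}}
    (Hc : bigraded_complex e d) m q (x y : C) :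
  pik e m q (x - y) = pik e m q x - pik e m q y.
Proof.
by rewrite (pikD Hc) -scaleN1r (pikZ Hc) scaleN1r.
Qed.

Lemma pik_split {R : pzRingType} {C : lmodType R}
    {e : int -> int -> {linear C -> C}} {d : {linear C -> C}}
    (Hc : bigraded_complex e d) m q (z : C) :
  pik e m q z = e (m - q) q z + pik e m (q + 1) z.
Proof.
apply: (ext_e Hc) => a b; rewrite linearD !(e_pik Hc) (bc_orth Hc).
have [->|hbq] := eqVneq b q.
  have -> : (a == m - q) = (a + q == m) by apply/eqP/eqP; lia.
  rewrite lexx andbT.
  have -> : (q + 1 <= q) = false by lia.
  by rewrite andbF addr0.
rewrite andbF add0r.
have -> : (q + 1 <= b) = (q <= b) by apply/idP/idP; lia.
by [].
Qed.

Lemma pik_pik {R : pzRingType} {C : lmodType R}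
    {e : int -> int -> {linear C -> C}} {d : {linear C -> C}}
    (Hc : bigraded_complex e d) m q q' (z : C) : q <= q' ->
  pik e m q' (pik e m q z) = pik e m q' z.
Proof.
move=> hq; apply: (ext_e Hc) => a b; rewrite !(e_pik Hc).
case: (boolP ((a + b == m) && (q' <= b))) => // /andP[-> hb].
by rewrite (le_trans hq hb).
Qed.

Lemma pik_Cpq_hi {R : pzRingType} {C : lmodType R}
    {e : int -> int -> {linear C -> C}} {d : {linear C -> C}}
    (Hc : bigraded_complex e d) m p q (x : C) : p + q = m ->
  Cpq e p q x -> pik e m (q + 1) x = 0.
Proof.
move=> hm hx; apply: (ext_e Hc) => a b; rewrite !(e_pik Hc) linear0.
case: ifP => // /andP[_ hb].
rewrite -hx (bc_orth Hc).
have -> : (b == q) = false by apply/negbTE; lia.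
by rewrite andbF.
Qed.

Lemma Ck_pik_le0 {R : pzRingType} {C : lmodType R}
    {e : int -> int -> {linear C -> C}} {d : {linear C -> C}}
    (Hc : bigraded_complex e d) m q (x : C) : Ck e m x -> q <= 0 ->
  pik e m q x = x.
Proof.
move=> hx hq; apply: (ext_e Hc) => a b; rewrite !(e_pik Hc).
case: (boolP (a + b == m)) => hab /=; last by rewrite hx.
case: (boolP (q <= b)) => // hb.
by rewrite (bc_neg Hc) //; apply/orP; right; lia.
Qed.

Lemma d_Ck {R : pzRingType} {C : lmodType R}
    {e : int -> int -> {linear C -> C}} {d : {linear C -> C}}
    (Hc : bigraded_complex e d) k (y : C) : Ck e (k - 1) y -> Ck e k (d y).
Proof.
move=> hy a b hab; have [s hs] := bc_fin Hc y.
rewrite hs !linear_sum big1 //= => pq _.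
case: (boolP (pq.1 + pq.2 == k - 1)) => h; last by rewrite hy // !linear0.
rewrite (bc_bideg Hc) //; move: h hab; lia.
Qed.

Lemma Npq_d {R : pzRingType} {C : lmodType R}
    {e : int -> int -> {linear C -> C}} {d : {linear C -> C}}
    (Hc : bigraded_complex e d) p0 q0 (x : C) : Npq e d p0 q0 x ->
  d x = e (p0 + 1) q0 (d x).
Proof.
move=> [hx [h1 h2]]; apply: (ext_e Hc) => a b; rewrite (bc_orth Hc).
case: ifP => // hn.
case: (boolP ((a == p0) && (b == q0 + 1))) => [/andP[/eqP-> /eqP->] //|hn1].
case: (boolP ((a == p0 + 2) && (b == q0 - 1))) => [/andP[/eqP-> /eqP->] //|hn2].
have -> : d x = d (e p0 q0 x) by rewrite hx.
rewrite (bc_bideg Hc) //; move: hn hn1 hn2; lia.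
Qed.

Lemma Ck_lin {R : pzRingType} {C : lmodType R}
    {e : int -> int -> {linear C -> C}} {d : {linear C -> C}}
    (Hc : bigraded_complex e d) {k} (c : R) {x y : C} :
  Ck e k x -> Ck e k y -> Ck e k (c *: x + y) /\ Ck e k 0.
Proof.
move=> hx hy; split=> a b hab; last by rewrite linear0.
by rewrite linearD linearZ_LR hx // hy // scaler0 addr0.
Qed.

Lemma BN_lin {R : pzRingType} {C : lmodType R}
    {e : int -> int -> {linear C -> C}} {d : {linear C -> C}}
    (Hc : bigraded_complex e d) {k j} (c : R) {x y : C} :
  BN e d k j x -> BN e d k j y -> BN e d k j (c *: x + y) /\ BN e d k j 0.
Proof.
move=> [x1 [[hx1 [hx2 hx3]] ->]] [y1 [[hy1 [hy2 hy3]] ->]]; split; last first.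
  by exists 0; rewrite !linear0; split=> //; rewrite /Npq /Cpq !linear0.
exists (c *: x1 + y1); split; last by rewrite linearD linearZ_LR.
rewrite /Npq /Cpq !linearD !linearZ_LR /= hx1 hy1 hx2 hy2 hx3 hy3.
by rewrite scaler0 addr0.
Qed.

Lemma Mk_lin {R : pzRingType} {C : lmodType R}
    {e : int -> int -> {linear C -> C}} {d : {linear C -> C}}
    (Hc : bigraded_complex e d) {k} (c : R) {x y : C} :
  Mk e d k x -> Mk e d k y -> Mk e d k (c *: x + y) /\ Mk e d k 0.
Proof.
move=> [hx1 hx2] [hy1 hy2]; have [h1 h2] := Ck_lin Hc c hx1 hy1.
split; split=> // i j hij.
  rewrite linearD linearZ_LR linearD linearZ_LR.
  by have [] := BN_lin Hc c (hx2 i j hij) (hy2 i j hij).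
rewrite !linear0; by have [] := BN_lin Hc 1 (hx2 i j hij) (hy2 i j hij).
Qed.

Lemma submod_of (R : pzRingType) (C : lmodType R) (P : C -> Prop) :
  P 0 -> (forall (c : R) x y, P x -> P y -> P (c *: x + y)) -> submod P.
Proof.
move=> h0 hl; split=> //.
  by move=> x y hx hy; have := hl 1 x y hx hy; rewrite scale1r.
by move=> a x hx; have := hl a x 0 hx h0; rewrite addr0.
Qed.

Lemma Bk_submod {R : pzRingType} {C : lmodType R}
    {e : int -> int -> {linear C -> C}} {d : {linear C -> C}}
    (Hc : bigraded_complex e d) k q : submod (Bk e d k q).
Proof.
apply: submod_of.
  by exists 0; split; [move=> a b _; rewrite linear0| rewrite linear0 (pik0 Hc)].
move=> c x y [x1 [hx1 ->]] [y1 [hy1 ->]].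
have [h1 _] := Ck_lin Hc c hx1 hy1.
exists (c *: x1 + y1); split=> //.
by rewrite linearD linearZ_LR (pikD Hc) (pikZ Hc).
Qed.

Lemma Zk_submod {R : pzRingType} {C : lmodType R}
    {e : int -> int -> {linear C -> C}} {d : {linear C -> C}}
    (Hc : bigraded_complex e d) k q : submod (Zk e d k q).
Proof.
apply: submod_of.
  exists 0; split; last by rewrite linear0 !(pik0 Hc).
  split; first by move=> a b _; rewrite linear0.
  move=> i j _; rewrite !linear0; exists 0; rewrite linear0.
  by split=> //; rewrite /Npq /Cpq !linear0.
move=> c x y [x1 [hx1 [hx2 ->]]] [y1 [hy1 [hy2 ->]]].
have [h1 _] := Mk_lin Hc c hx1 hy1.
exists (c *: x1 + y1); split=> //; split.
  by rewrite linearD linearZ_LR (pikD Hc) (pikZ Hc) hx2 hy2 scaler0 addr0.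
by rewrite (pikD Hc) (pikZ Hc).
Qed.

Lemma submod_and {R : pzRingType} {C : lmodType R} (P Q : C -> Prop) :
  submod P -> submod Q -> submod (fun x => P x /\ Q x).
Proof.
move=> [p0 pD pZ] [q0 qD qZ]; split=> //.
  by move=> x y [] ? ? [] ? ?; split; auto.
by move=> a x [] ? ?; split; auto.
Qed.

Lemma Cpq_submod {R : pzRingType} {C : lmodType R}
    (e : int -> int -> {linear C -> C}) p q : submod (Cpq e p q).
Proof.
split; rewrite /Cpq; first by rewrite linear0.
  by move=> x y hx hy; rewrite linearD hx hy.
by move=> a x hx; rewrite linearZ_LR hx.
Qed.

Lemma Bk_Zk {R : pzRingType} {C : lmodType R}
    {e : int -> int -> {linear C -> C}} {d : {linear C -> C}}
    (Hc : bigraded_complex e d) k q x : Bk e d k q x -> Zk e d k q x.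
Proof.
move=> [y [hy ->]]; exists (d y); split; last by rewrite (bc_dd Hc) (pik0 Hc).
split; first exact: d_Ck.
move=> i j _; rewrite (bc_dd Hc) linear0; exists 0; rewrite linear0.
by split=> //; rewrite /Npq /Cpq !linear0.
Qed.

Lemma ker_gen {R : pzRingType} {C : lmodType R}
    {e : int -> int -> {linear C -> C}} {d : {linear C -> C}}
    (Hc : bigraded_complex e d) p q k w : p + q = k ->
  pik e k (q + 1) (pik e k q w) = 0 -> Cpq e p q (pik e k q w).
Proof.
move=> hk; rewrite (pik_pik Hc) ?lerDl // => h.
rewrite /Cpq (pik_split Hc k q w) h addr0.
have -> : k - q = p by rewrite -hk addrK.
by rewrite (bc_orth Hc) !eqxx.
Qed.

Lemma Z_surj {R : pzRingType} {C : lmodType R}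
    {e : int -> int -> {linear C -> C}} {d : {linear C -> C}}
    (Hc : bigraded_complex e d) k q y : Zk e d k (q + 1) y ->
  exists x, Zk e d k q x /\ pik e k (q + 1) x = y.
Proof.
move=> [eta [[hC hB] [hd ->]]].
have hq : (k + 1 - q) + q = k + 1 by rewrite subrK.
have [x0 [hN hx0]] := hB _ _ hq.
have hp1 : k - q + 1 = k + 1 - q by rewrite addrAC.
have hdx : d x0 = e (k + 1 - q) q (d x0) by rewrite -hp1; apply: Npq_d.
have hx0C : Cpq e (k - q) q x0 by case: hN.
have hx0k : Ck e k x0.
  move=> a b hab; rewrite -hx0C (bc_orth Hc).
  case: ifP => // /andP[/eqP ha /eqP hb]; exfalso; move: hab; rewrite ha hb subrK eqxx.
  by [].
have hhi : pik e k (q + 1) x0 = 0 by apply: (pik_Cpq_hi Hc) hx0C; rewrite subrK.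
exists (pik e k q (eta - x0)); split; last first.
  by rewrite (pik_pik Hc) ?lerDl // (pikB Hc) hhi subr0.
exists (eta - x0); split; last split=> //.
- split.
    by have [h _] := Ck_lin Hc (-1) hx0k hC; rewrite scaleN1r addrC in h.
  move=> i j hij; rewrite linearB linearB /=.
  case: (boolP ((i == k + 1 - q) && (j == q))) => [/andP[/eqP hi /eqP hj]|hn].
    subst i j; rewrite hx0 -hdx subrr.
    by have [] := BN_lin Hc 1 (hB _ _ hij) (hB _ _ hij).
  rewrite hdx (bc_orth Hc) (negbTE hn) subr0; exact: hB.
- rewrite (pik_split Hc) linearB linearB /= hx0 -hdx subrr add0r.
  rewrite (pikB Hc) hd sub0r.
  by rewrite (pik_Cpq_hi Hc (k + 1) (k + 1 - q) q (d x0)) ?oppr0 // ?subrK.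
Qed.

Theorem theorem3p3 (R : pzRingType) (C : lmodType R)
    (e : int -> int -> {linear C -> C}) (d : {linear C -> C})
    (Hc : bigraded_complex e d) (p q k : int) (hk : p + q = k) :
  let B  := Bk e d k q in
  let B1 := Bk e d k (q + 1) in
  let Z  := Zk e d k q in
  let Z1 := Zk e d k (q + 1) in
  let BC := fun x => B x /\ Cpq e p q x in
  let ZC := fun x => Z x /\ Cpq e p q x in
  let pi1 := pik e k (q + 1) in
  [/\ (* all objects are submodules, so the quotients are modules *)
      [/\ submod B, submod B1, submod Z, submod Z1 & (submod BC /\ submod ZC)],
      (* vertical inclusions top -> middle (columns 0 -> B -> Z -> Z/B -> 0) *)
      [/\ forall x, BC x -> ZC x, forall x, B x -> Z x & forall x, B1 x -> Z1 x],
      (* top row *)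
      short_exact_incl BC B B1 pi1,
      (* middle row *)
      short_exact_incl ZC Z Z1 pi1 &
      (* bottom row *)
      short_exact_quot ZC BC Z B Z1 B1 pi1].
Proof.
move=> B B1 Z Z1 BC ZC pi1.
have sB : submod B := Bk_submod Hc k q.
have sB1 : submod B1 := Bk_submod Hc k (q + 1).
have sZ : submod Z := Zk_submod Hc k q.
have sZ1 : submod Z1 := Zk_submod Hc k (q + 1).
have hBZ : forall x, B x -> Z x by move=> x; apply: Bk_Zk.
have hBZ1 : forall x, B1 x -> Z1 x by move=> x; apply: Bk_Zk.
have kerB : forall x, B x -> (pi1 x = 0 <-> BC x).
  move=> x hx; split.
    move=> h; split=> //; case: hx => y [_ hy]; rewrite hy.
    by apply: (ker_gen Hc) hk _; rewrite -hy.
  by move=> [_ hc]; apply: (pik_Cpq_hi Hc k p q x hk hc).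
have kerZ : forall x, Z x -> (pi1 x = 0 <-> ZC x).
  move=> x hx; split.
    move=> h; split=> //; case: hx => y [_ [_ hy]]; rewrite hy.
    by apply: (ker_gen Hc) hk _; rewrite -hy.
  by move=> [_ hc]; apply: (pik_Cpq_hi Hc k p q x hk hc).
have BB1 : forall x, B x -> B1 (pi1 x).
  move=> x [y [hy ->]]; exists y; split=> //.
  by rewrite /pi1 (pik_pik Hc) ?lerDl.
have ZZ1 : forall x, Z x -> Z1 (pi1 x).
  move=> x [eta [hM [hd ->]]]; exists eta; split=> //; split.
    by rewrite -(pik_pik Hc (k + 1) q (q + 1)) ?lerDl // hd (pik0 Hc).
  by rewrite /pi1 (pik_pik Hc) ?lerDl.
have B1surj : forall y, B1 y -> exists x, B x /\ pi1 x = y.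
  move=> y [w [hw ->]]; exists (pik e k q (d w)); split; first by exists w.
  by rewrite /pi1 (pik_pik Hc) ?lerDl.
have Z1surj : forall y, Z1 y -> exists x, Z x /\ pi1 x = y.
  by move=> y hy; apply: (Z_surj Hc).
case: (sB1) => B10 _ _.
split.
- split=> //; split; apply: submod_and => //; exact: Cpq_submod.
- split=> //; by move=> x [hx hc]; split=> //; apply: hBZ.
- by split=> // x [].
- by split=> // x [].
split.
- by split=> // x [].
- by move=> x [hx hc] hb; split.
- by move=> x hx; have := (kerZ x hx.1).2 hx; rewrite /pi1 => ->.
- move=> x hx [w [hw hpw]].
  pose b := pik e k q (d w).
  have hb : B b by exists w.
  case: sZ => _ ZD ZZ.
  exists (x - b); split.
    have hy : Z (x - b) by apply: ZD => //; rewrite -scaleN1r; apply: ZZ; apply: hBZ.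
    apply/(kerZ _ hy).
    rewrite /pi1 (pikB Hc) -/pi1 hpw /b /pi1 (pik_pik Hc) ?lerDl //.
    by rewrite subrr.
  by rewrite opprB addrCA subrr addr0.
- move=> w hw; have [x [hx hxw]] := Z1surj w hw.
  by exists x; split=> //; rewrite hxw subrr.
Qed.
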